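(* Consider an instance of the MA-HLP and the formulation $FZ\text{-}S$ as described in the context. Let $(\overline{\mathbf y},\overline{\mathbf z},\overline{\boldsymbol\eta})$ be an optimal solution of the LP relaxation of $FZ\text{-}S$, with $\overline{\mathbf y}\in[0,1]^E$, $\overline{\mathbf z}\in[0,1]^V$. For $r\in R$ and $h\in T^r$, let $\overline u_{rh}=\overline y_{e_h}$ if $h\in T^r_y$ and $\overline u_{rh}=\overline z_{i_h}$ if $h\in T^r_z$, and let $\overline t_r=\min\{t\in T^r:\ \sum_{h=1}^{t}\overline u_{rh}\ge 1\}$ (this set being presupposed nonempty). Then the optimal value of the LP relaxation of $FZ\text{-}S$ is \[\overline v_{FZS}=\sum_{i\in V}f_i\overline z_i+\sum_{r\in R}\Big[\overline v_{r\overline t_r}\Big(1-\sum_{h=1}^{\overline t_r-1}\overline u_{rh}\Big)+\sum_{h=1}^{\overline t_r-1}\overline v_{rh}\,\overline u_{rh}\Big].\]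
   Context: Instance: a complete network with node set $V=\{1,\dots,n\}$, unit routing costs $c_{ij}\ge0$ ($i,j\in V$) satisfying the triangle inequality with $c_{ii}=0$; $E=\{ij: i<j\}$ is the set of undirected edges and $\delta(i)$ the set of edges incident with $i$. Each node $i$ has hub setup cost $f_i\ge0$. Commodities $r\in R$ are triplets $(o^r,d^r,w^r)$ with $w^r\ge0$. Parameters $0\le\alpha\le1$, $\gamma,\theta>\alpha$. For $r\in R$, $i,j\in V$: $C_{rij}=w^r(\gamma c_{o^ri}+\alpha c_{ij}+\theta c_{jd^r})$; $F_{re}=\min\{C_{rij},C_{rji}\}$ for $e=ij\in E$; $H_{ri}=C_{rii}$. For $r\in R$ let $E^r=\{e=ij\in E: F_{re}<\min\{H_{ri},H_{rj}\}\}$ and $V^r=\{i\in V:\ \text{there is } e\in\delta(i) \text{ with } H_{ri}<F_{re}\}$. Let $T^r=\{1,\dots,|E^r|+|V^r|\}$ index the values $\{F_{re}\}_{e\in E^r}\cup\{H_{ri}\}_{i\in V^r}$ sorted in nondecreasing order (ties broken arbitrarily) as $\overline v_{r1}\le\overline v_{r2}\le\cdots$; $T^r=T^r_y\cup T^r_z$ where for $t\in T^r_y$ the value $\overline v_{rt}=F_{re_t}$ comes from edge $e_t\in E^r$, and for $t\in T^r_z$ the value $\overline v_{rt}=H_{ri_t}$ comes from node $i_t\in V^r$. Formulation $FZ\text{-}S$: variables $y_e\in\{0,1\}$ ($e\in E$), $z_i\in\{0,1\}$ ($i\in V$), $\eta^r\ge0$ ($r\in R$); minimize $\sum_{i\in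 V}f_iz_i+\sum_{r\in R}\eta^r$ subject to, for all $r\in R$, $t\in T^r$: $\eta^r\ge\overline v_{rt}+\sum_{h\in T^r_y,\,h\le t-1}(F_{re_h}-\overline v_{rt})y_{e_h}+\sum_{h\in T^r_z,\,h\le t-1}(H_{ri_h}-\overline v_{rt})z_{i_h}$; and $y_e\le z_i$, $y_e\le z_j$ for all $e=ij\in E$. The LP relaxation replaces the binary constraints by $y_e,z_i\in[0,1]$. *)

(* Defs.v *)
From HB Require Import structures.
From mathcomp Require Import all_boot all_order all_algebra.
Set Implicit Arguments. Unset Strict Implicit. Unset Printing Implicit Defensive.
Import Order.TTheory GRing.Theory Num.Theory.
Local Open Scope ring_scope.

(* Undirected edges e = ij with i < j, on node set V = 'I_n. *)
Definition edge (n : nat) := {p : 'I_n * 'I_n | (p.1 < p.2)%N}.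

(* An element of T^r is either an edge (T^r_y) or a node (T^r_z). *)
Definition item (n : nat) := (edge n + 'I_n)%type.

Section FZS.
Variables (R : realFieldType) (n : nat) (K : finType).
(* K = commodity set R; o, d origins/destinations, w weights *)
Variables (c : 'I_n -> 'I_n -> R) (o d : K -> 'I_n) (w : K -> R)
          (alpha gamma theta : R).

Definition Ccost (r : K) (i j : 'I_n) : R :=
  w r * (gamma * c (o r) i + alpha * c i j + theta * c j (d r)).

Definition Fcost (r : K) (e : edge n) : R :=
  Num.min (Ccost r (val e).1 (val e).2) (Ccost r (val e).2 (val e).1).

Definition Hcost (r : K) (i : 'I_n) : R := Ccost r i i.

Definition incident (i : 'I_n) (e : edge n) : bool :=
  ((val e).1 == i) || ((val e).2 == i).

Definition inEr (r : K) (e : edge n) : Prop :=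
  Fcost r e < Num.min (Hcost r (val e).1) (Hcost r (val e).2).

Definition inVr (r : K) (i : 'I_n) : Prop :=
  exists e : edge n, incident i e /\ Hcost r i < Fcost r e.

Definition inT (r : K) (a : item n) : Prop :=
  match a with inl e => inEr r e | inr i => inVr r i end.

Definition vval (r : K) (a : item n) : R :=
  match a with inl e => Fcost r e | inr i => Hcost r i end.

Definition uval (y : edge n -> R) (z : 'I_n -> R) (a : item n) : R :=
  match a with inl e => y e | inr i => z i end.

Definition valid_order (s : K -> seq (item n)) : Prop :=
  forall r : K,
    [/\ uniq (s r), (forall a, a \in s r <-> inT r a)
      & sorted (fun a b => vval r a <= vval r b) (s r)].

(* the element at (0-based) position t of s, i.e. position t+1 in the paper *)
Definition kth (T : Type) (s : seq T) (t : 'I_(size s)) : T :=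
  tnth (in_tuple s) t.

Definition FZS_LP_feasible (s : K -> seq (item n))
    (y : edge n -> R) (z : 'I_n -> R) (eta : K -> R) : Prop :=
  [/\ (forall e, 0 <= y e <= 1),
      (forall i, 0 <= z i <= 1),
      (forall r, 0 <= eta r),
      (forall (r : K) (t : 'I_(size (s r))),
          vval r (kth t)
          + \sum_(b <- take t (s r)) (vval r b - vval r (kth t)) * uval y z b
          <= eta r)
    & (forall e : edge n, y e <= z (val e).1 /\ y e <= z (val e).2)].

Definition FZS_objective (f : 'I_n -> R) (z : 'I_n -> R) (eta : K -> R) : R :=
  \sum_(i < n) f i * z i + \sum_(r : K) eta r.

Definition FZS_LP_optimal (s : K -> seq (item n)) (f : 'I_n -> R)
    (y : edge n -> R) (z : 'I_n -> R) (eta : K -> R) : Prop :=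
  FZS_LP_feasible s y z eta /\
  forall y' z' eta', FZS_LP_feasible s y' z' eta' ->
    FZS_objective f z eta <= FZS_objective f z' eta'.

End FZS.

(* Main.v *)
Require Import Defs.
From HB Require Import structures.
From mathcomp Require Import all_boot all_order all_algebra.
Import Order.TTheory GRing.Theory Num.Theory.
From mathcomp Require Import ring lra.
Local Open Scope ring_scope.

Section Key.
Variables (R : realFieldType) (T : Type) (x0 : T) (s : seq T) (v u : T -> R).

Definition Su t := \sum_(b <- take t s) u b.
Definition Svu t := \sum_(b <- take t s) v b * u b.
Definition G t := v (nth x0 s t) + \sum_(b <- take t s) (v b - v (nth x0 s t)) * u b.

Lemma sumB_mul (l : seq T) c :
  \sum_(b <- l) (v b - c) * u b = \sum_(b <- l) v b * u b - c * \sum_(b <- l) u b.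
Proof.
rewrite mulr_sumr -sumrB; apply: eq_bigr => b _; ring.
Qed.

Lemma GE t : G t = v (nth x0 s t) * (1 - Su t) + Svu t.
Proof. rewrite /G sumB_mul /Su /Svu; ring. Qed.

Lemma Su_step t : (t < size s)%N -> Su t.+1 = Su t + u (nth x0 s t).
Proof. by move=> h; rewrite /Su (take_nth x0 h) -cats1 big_cat big_seq1. Qed.

Lemma Svu_step t : (t < size s)%N -> Svu t.+1 = Svu t + v (nth x0 s t) * u (nth x0 s t).
Proof. by move=> h; rewrite /Svu (take_nth x0 h) -cats1 big_cat big_seq1. Qed.

Lemma G_step t : (t.+1 < size s)%N ->
  G t.+1 - G t = (v (nth x0 s t.+1) - v (nth x0 s t)) * (1 - Su t.+1).
Proof.
move=> h; have h' : (t < size s)%N by apply: ltnW.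
rewrite !GE Su_step // Svu_step //; ring.
Qed.

Hypotheses (hsort : sorted (fun a b => v a <= v b) s) (hu : forall b, 0 <= u b).

Lemma vmono t : (t.+1 < size s)%N -> v (nth x0 s t) <= v (nth x0 s t.+1).
Proof.
move=> h.
have tr : transitive (fun a b => v a <= v b).
  by move=> a b c' h1 h2; apply: le_trans h1 h2.
apply: (sorted_ltn_nth tr x0 hsort) => //; rewrite inE //; exact: ltnW.
Qed.

Lemma Su_mono t k : Su t <= Su (t + k).
Proof.
rewrite /Su takeD big_cat /= lerDl; apply: sumr_ge0 => b _; exact: hu.
Qed.

Lemma key tb : (tb < size s)%N -> 1 <= Su tb.+1 ->
  (forall t, (t < tb)%N -> Su t.+1 < 1) ->
  forall t, (t < size s)%N -> G t <= G tb.
Proof.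
move=> htb h1 hlt.
have up : forall k, (k <= tb)%N -> G (tb - k) <= G tb.
  elim=> [|k IH] hk; first by rewrite subn0.
  apply: le_trans (IH (ltnW hk)).
  have e : (tb - k = (tb - k.+1).+1)%N by rewrite subnSK.
  rewrite e -subr_ge0 G_step; last by rewrite -e; apply: leq_ltn_trans htb; apply: leq_subr.
  apply: mulr_ge0.
    rewrite subr_ge0; apply: vmono; rewrite -e; apply: leq_ltn_trans htb; apply: leq_subr.
  rewrite subr_ge0 ltW // hlt //; rewrite -subSn // subSS; apply: leq_subr. 
have down : forall k, (tb + k < size s)%N -> G (tb + k) <= G tb.
  elim=> [|k IH] hk; first by rewrite addn0.
  have hk' : (tb + k < size s)%N by apply: ltn_trans hk; rewrite addnS.
  apply: le_trans (IH hk').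
  rewrite -subr_le0 addnS G_step; last by rewrite -addnS.
  apply: mulr_ge0_le0.
    by rewrite subr_ge0; apply: vmono; rewrite -addnS.
  rewrite subr_le0; apply: le_trans h1 _.
  have := Su_mono tb.+1 k; by rewrite addSn.
move=> t ht; case: (leqP t tb) => h.
  by have := up (tb - t)%N (leq_subr _ _); rewrite subKn.
have := down (t - tb)%N; rewrite subnKC ?(ltnW h) //; by apply.
Qed.
End Key.

Theorem proposition2 (R : realFieldType) (n : nat) (K : finType)
    (c : 'I_n -> 'I_n -> R) (f : 'I_n -> R)
    (o d : K -> 'I_n) (w : K -> R) (alpha gamma theta : R)
    (hc0 : forall i j, 0 <= c i j)
    (hcii : forall i, c i i = 0)
    (hctri : forall i j k, c i k <= c i j + c j k)
    (hf : forall i, 0 <= f i)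
    (hw : forall r, 0 <= w r)
    (halpha : 0 <= alpha <= 1) (hgamma : alpha < gamma) (htheta : alpha < theta)
    (s : K -> seq (item n))
    (hs : valid_order c o d w alpha gamma theta s)
    (ybar : edge n -> R) (zbar : 'I_n -> R) (etabar : K -> R)
    (hopt : FZS_LP_optimal c o d w alpha gamma theta s f ybar zbar etabar)
    (tbar : forall r : K, 'I_(size (s r)))
    (htbar : forall r : K,
        1 <= \sum_(b <- take (tbar r).+1 (s r)) uval ybar zbar b /\
        (forall t : nat, (t < tbar r)%N ->
           \sum_(b <- take t.+1 (s r)) uval ybar zbar b < 1)) :
  FZS_objective f zbar etabar =
  \sum_(i < n) f i * zbar i
  + \sum_(r : K)
      (vval c o d w alpha gamma theta r (kth (tbar r))
         * (1 - \sum_(b <- take (tbar r) (s r)) uval ybar zbar b)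
       + \sum_(b <- take (tbar r) (s r))
           vval c o d w alpha gamma theta r b * uval ybar zbar b).
Proof.
case: hopt => [[hy hz heta hcon hyz] hmin].
have hu : forall b, 0 <= uval ybar zbar b.
  by case=> [e|i] /=; [case/andP: (hy e) | case/andP: (hz i)].
have hC : forall r i j, 0 <= Ccost c o d w alpha gamma theta r i j.
  move=> r i j; rewrite /Ccost; apply: mulr_ge0 => //.
  case/andP: halpha => ha _.
  have hg : 0 <= gamma by apply: le_trans ha (ltW hgamma).
  have ht : 0 <= theta by apply: le_trans ha (ltW htheta).
  by rewrite !addr_ge0 // mulr_ge0.
have hv : forall r b, 0 <= vval c o d w alpha gamma theta r b.
  move=> r [e|i] /=; last exact: hC.
  by rewrite /Fcost le_min !hC.
have ekth : forall r (t : 'I_(size (s r))) x, nth x (s r) t = kth t.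
  by move=> r t x; exact: (esym (@tnth_nth _ _ x (in_tuple (s r)) t)).
pose g r := @G R _ (kth (tbar r)) (s r) (vval c o d w alpha gamma theta r)
              (uval ybar zbar) (tbar r).
have hkth : forall r, vval c o d w alpha gamma theta r (kth (tbar r))
   + \sum_(b <- take (tbar r) (s r))
       (vval c o d w alpha gamma theta r b
          - vval c o d w alpha gamma theta r (kth (tbar r))) * uval ybar zbar b = g r.
  by move=> r; rewrite /g /G ekth.
have hle : forall r (t : 'I_(size (s r))),
   vval c o d w alpha gamma theta r (kth t)
   + \sum_(b <- take t (s r))
       (vval c o d w alpha gamma theta r b
          - vval c o d w alpha gamma theta r (kth t)) * uval ybar zbar b <= g r.
  move=> r t; rewrite -(ekth r t (kth (tbar r))).
  case: (hs r) => _ _ hsort.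
  case: (htbar r) => h1 h2.
  exact: (@key R _ (kth (tbar r)) (s r) _ _ hsort hu _ (ltn_ord _) h1 h2 _ (ltn_ord t)).
have hg0 : forall r, 0 <= g r.
  move=> r; rewrite /g GE; apply: addr_ge0.
    apply: mulr_ge0 => //; rewrite subr_ge0.
    case: (htbar r) => _ h2; move: h2.
    case E: (nat_of_ord (tbar r)) => [|t] h2.
      by rewrite /Su take0 big_nil ler01.
    by apply: ltW; apply: h2.
  by apply: sumr_ge0 => b _; apply: mulr_ge0.
have feas : FZS_LP_feasible c o d w alpha gamma theta s ybar zbar g.
  by split.
have hmn := hmin _ _ _ feas.
have hge : forall r, g r <= etabar r.
  by move=> r; rewrite -hkth; apply: hcon.
have hsum : \sum_(r : K) etabar r = \sum_(r : K) g r.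
  apply/le_anti/andP; split; last by apply: ler_sum => r _; apply: hge.
  by move: hmn; rewrite /FZS_objective lerD2l.
rewrite {1}/FZS_objective hsum; congr (_ + _).
apply: eq_bigr => r _; rewrite /g GE /Su /Svu ekth.
by [].
Qed.
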